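(* Let $\Gamma=(V,\nu,\mu)$ be a fuzzy graph on $n$ vertices. Then $$\sigma^*(\Gamma)\le\frac{(n-1)^2\,\bigl(2\,\mathrm{ew}(\Gamma)\bigr)^2}{n^3}.$$
   Context: A fuzzy graph $\Gamma=(V,\nu,\mu)$ consists of a finite vertex set $V$ with $|V|=n\ge1$, a map $\nu:V\to[0,1]$, and a symmetric map $\mu:V\times V\to[0,1]$ with $\mu(u,v)\le\min(\nu(u),\nu(v))$. The fuzzy degree is $d_\Gamma(v)=\sum_{u\ne v}\mu(v,u)$, the fuzzy size is $\mathrm{ew}(\Gamma)=\sum_{\{u,v\},u\ne v}\mu(u,v)$, $\lambda=2\,\mathrm{ew}(\Gamma)/n$, and the fuzzy sigma index is $\sigma^*(\Gamma)=\frac1n\sum_{v}(d_\Gamma(v)-\lambda)^2$. *)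

(* Defs.v *)
From HB Require Import structures.
From mathcomp Require Import all_boot all_order all_algebra.
Set Implicit Arguments. Unset Strict Implicit. Unset Printing Implicit Defensive.
Import Order.TTheory GRing.Theory Num.Theory.
Local Open Scope ring_scope.

Definition is_fuzzy_graph (R : realFieldType) (V : finType)
    (nu : V -> R) (mu : V -> V -> R) : Prop :=
  [/\ forall v, 0 <= nu v <= 1,
      forall u v, 0 <= mu u v <= 1,
      forall u v, mu u v = mu v u &
      forall u v, mu u v <= Num.min (nu u) (nu v)].

Definition fdeg (R : realFieldType) (V : finType) (mu : V -> V -> R) (v : V) : R :=
  \sum_(u | u != v) mu v u.

(* fuzzy size ew = sum over unordered pairs {u,v}, u <> v, of mu(u,v):
   each unordered pair counted once, via a pair (u,v) with u < v in enum order. *)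
Definition ew (R : realFieldType) (V : finType) (mu : V -> V -> R) : R :=
  \sum_(p : V * V | (enum_rank p.1 < enum_rank p.2)%N) mu p.1 p.2.

Definition flambda (R : realFieldType) (V : finType) (mu : V -> V -> R) : R :=
  2 * ew mu / #|V|%:R.

Definition fsigma_star (R : realFieldType) (V : finType) (mu : V -> V -> R) : R :=
  (\sum_v (fdeg mu v - flambda mu) ^+ 2) / #|V|%:R.

(* Main.v *)
Require Import Defs.
From HB Require Import structures.
From mathcomp Require Import all_boot all_order all_algebra.
From mathcomp Require Import ring lra.
Import Order.TTheory GRing.Theory Num.Theory.
Local Open Scope ring_scope.

Lemma sum_fdeg (R : realFieldType) (V : finType) (mu : V -> V -> R) :
  (forall u v, mu u v = mu v u) ->
  \sum_v fdeg mu v = 2 * ew mu.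
Proof.
move=> sym; rewrite /fdeg /ew.
rewrite (pair_big_dep xpredT (fun v u => u != v) (fun v u => mu v u)) /=.
rewrite (bigID (fun p : V * V => (enum_rank p.1 < enum_rank p.2)%N)) /=.
have -> : \sum_(p : V * V | (p.2 != p.1) && (enum_rank p.1 < enum_rank p.2)%N)
    mu p.1 p.2 = \sum_(p : V * V | (enum_rank p.1 < enum_rank p.2)%N) mu p.1 p.2.
  apply: eq_bigl => -[a b] /=.
  case h: (enum_rank a < enum_rank b)%N; rewrite ?andbT ?andbF //.
  by apply/eqP => eab; rewrite eab ltnn in h.
have -> : \sum_(p : V * V | (p.2 != p.1) && ~~ (enum_rank p.1 < enum_rank p.2)%N)
    mu p.1 p.2 = \sum_(p : V * V | (enum_rank p.1 < enum_rank p.2)%N) mu p.1 p.2.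
  rewrite (reindex_inj (h := fun p : V * V => (p.2, p.1))); last first.
    by move=> [a b] [c d] /= [-> ->].
  apply: eq_big => -[a b] /=; last by move=> _; rewrite sym.
  rewrite -leqNgt; apply/idP/idP.
    move/andP=> [nab hle]; rewrite ltn_neqAle hle andbT.
    by apply: contra nab => /eqP/val_inj/enum_rank_inj ->.
  move=> h; rewrite (ltnW h) andbT.
  by apply/eqP => eab; rewrite eab ltnn in h.
by rewrite mulr_natl mulr2n.
Qed.

Theorem theorem2p8 (R : realFieldType) (V : finType) (nu : V -> R) (mu : V -> V -> R) :
  (0 < #|V|)%N ->
  is_fuzzy_graph nu mu ->
  fsigma_star mu <=
    (#|V|%:R - 1) ^+ 2 * (2 * ew mu) ^+ 2 / (#|V|%:R ^+ 3).
Proof.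
move=> n0 [_ hmu sym _].
have sumd := @sum_fdeg R V mu sym.
set E := 2 * ew mu in sumd *.
set n : R := #|V|%:R.
have npos : 0 < n by rewrite ltr0n.
have n1 : 1 <= n by rewrite ler1n.
have d0 : forall v, 0 <= fdeg mu v.
  by move=> v; apply: sumr_ge0 => u _; case/andP: (hmu v u).
have dle : forall v, 2 * fdeg mu v <= E.
  move=> v; rewrite -sumd (bigD1 v) //= mulr_natl mulr2n lerD2l.
  rewrite /fdeg; apply: ler_sum => u uv.
  rewrite /fdeg (bigD1 v) 1?eq_sym //= sym -[X in X <= _]addr0 lerD2l.
  by apply: sumr_ge0 => w _; case/andP: (hmu u w).
set S := \sum_v fdeg mu v ^+ 2.
have SE : 2 * S <= E ^+ 2.
  have : S <= \sum_v fdeg mu v * (E / 2).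
    apply: ler_sum => v _; rewrite expr2; apply: ler_wpM2l => //.
    by have := dle v; lra.
  by rewrite -mulr_suml sumd; lra.
have -> : fsigma_star mu = (S - E ^+ 2 / n) / n.
  rewrite /fsigma_star /flambda -/E -/n; congr (_ / _).
  under eq_bigr => v _ do rewrite sqrrB.
  rewrite big_split big_split /= sumr_const -/S -/n.
  rewrite sumrN sumrMnl -mulr_suml sumd.
  rewrite -mulr_natr (_ : #|xpredT| = #|V|); last by apply: eq_card.
  field; by rewrite lt0r_neq0.
set T := (n - 1) ^+ 2 * E ^+ 2 / n ^+ 3.
have -> : T = ((n - 1) ^+ 2 * E ^+ 2 / n ^+ 2) / n.
  by rewrite /T; field; rewrite lt0r_neq0.
rewrite ler_pM2r ?invr_gt0 //.
rewrite lerBlDr.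
have -> : (n - 1) ^+ 2 * E ^+ 2 / n ^+ 2 + E ^+ 2 / n =
   ((n - 1) ^+ 2 * E ^+ 2 + E ^+ 2 * n) / n ^+ 2.
  by field; rewrite lt0r_neq0.
rewrite ler_pdivlMr ?exprn_gt0 //.
have E2 : 0 <= E ^+ 2 by rewrite sqr_ge0.
have h1 : S * n ^+ 2 <= E ^+ 2 / 2 * n ^+ 2.
  by apply: ler_wpM2r; [rewrite sqr_ge0 | lra].
have h2 : 0 <= E ^+ 2 * ((n - 1) ^+ 2 + 1).
  by apply: mulr_ge0 => //; apply: addr_ge0 => //; rewrite sqr_ge0.
apply: (le_trans h1).
have -> : (n - 1) ^+ 2 * E ^+ 2 + E ^+ 2 * n =
  E ^+ 2 / 2 * n ^+ 2 + E ^+ 2 * ((n - 1) ^+ 2 + 1) / 2 by field.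
lra.
Qed.
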